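(* Let $T:X\rightrightarrows X^*$ be a pre-maximal pseudomonotone operator. Then $T$ is $D$-maximal pseudomonotone if and only if $\widehat{T}=T^\rho_D$.
   Context: $X$ is a real Banach space with dual $X^*$ and pairing $\langle x,x^*\rangle=x^*(x)$. A multivalued operator $T:X\rightrightarrows X^*$ is identified with its graph $T\subset X\times X^*$; $T(x)=\{x^*:(x,x^* )\in T\}$, $\mathrm{dom}(T)=\{x:T(x)\ne\emptyset\}$, $Z_T=\{x:0\in T(x)\}$. For $A\subset X^*$, $\operatorname{cone}(A)=\{tv:t\ge0,v\in A\}$ and $\operatorname{cone}_\circ(A)=\{tv:t>0,v\in A\}$. For $C\subset X$, $N_C(x)=\{x^*: \langle y-x,x^*\rangle\le0\ \forall y\in C\}$. For $(x,x^* ),(y,y^* )\in X\times X^*$, write $(x,x^* )\sim_p(y,y^* )$ if either $\min\{\langle x-y,y^*\rangle,\langle y-x,x^*\rangle\}<0$ or $\langle x-y,y^*\rangle=\langle y-x,x^*\rangle=0$. The pseudomonotone polar is $T^\rho=\{(x,x^* ): (x,x^* )\sim_p(y,y^* )\ \forall (y,y^* )\in T\}$, and $T^\rho_D$ denotes its restriction to $\mathrm{dom}(T)$. $T$ is pseudomonotone if for all $(x,x^* ),(y,y^* )\in T$, $\langle y-x,x^*\rangle\ge0$ implies $\langle y-x,y^*\rangle\ge0$; $T$ is pre-maximal pseudomonotone if both $T$ and $T^\rho$ are pseudomonotone. Two operators $T,S$ are equivalent if $\mathrm{dom}(T)=\mathrm{dom}(S)$, $Z_T=Z_S$ and $\operatorname{cone}(T(x))=\operatorname{cone}(S(x))$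 for all $x\in\mathrm{dom}(T)\setminus Z_T$. $T$ is $D$-maximal pseudomonotone if $T$ is pseudomonotone and there is a pseudomonotone operator $S$ equivalent to $T$ which has no proper pseudomonotone extension with the same domain. For $x\in Z_T$, $L(T,x)=\{y\in X:\exists y^*\in T(y),\ \langle x-y,y^*\rangle\ge0\}$, and $\widehat T(x)=N_{L(T,x)}(x)$ if $x\in Z_T$, $\widehat T(x)=\operatorname{cone}_\circ(T(x))$ if $x\in\mathrm{dom}(T)\setminus Z_T$, $\widehat T(x)=\emptyset$ if $x\notin\mathrm{dom}(T)$. *)

(* Defs.v *)
From Stdlib Require Import Reals.
Open Scope R_scope.

Record BanachSpace := {
  bs_car :> Type;
  bs_zero : bs_car;
  bs_add : bs_car -> bs_car -> bs_car;
  bs_opp : bs_car -> bs_car;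
  bs_scal : R -> bs_car -> bs_car;
  bs_norm : bs_car -> R;
  bs_addA : forall x y z, bs_add x (bs_add y z) = bs_add (bs_add x y) z;
  bs_addC : forall x y, bs_add x y = bs_add y x;
  bs_add0 : forall x, bs_add x bs_zero = x;
  bs_addN : forall x, bs_add x (bs_opp x) = bs_zero;
  bs_scalA : forall a b x, bs_scal a (bs_scal b x) = bs_scal (a * b) x;
  bs_scal1 : forall x, bs_scal 1 x = x;
  bs_scalDr : forall a x y, bs_scal a (bs_add x y) = bs_add (bs_scal a x) (bs_scal a y);
  bs_scalDl : forall a b x, bs_scal (a + b) x = bs_add (bs_scal a x) (bs_scal b x);
  bs_norm_eq0 : forall x, bs_norm x = 0 -> x = bs_zero;
  bs_norm_scal : forall a x, bs_norm (bs_scal a x) = Rabs a * bs_norm x;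
  bs_norm_triangle : forall x y, bs_norm (bs_add x y) <= bs_norm x + bs_norm y;
  bs_complete : forall u : nat -> bs_car,
    (forall eps, eps > 0 -> exists N, forall n m, (n >= N)%nat -> (m >= N)%nat ->
        bs_norm (bs_add (u n) (bs_opp (u m))) < eps) ->
    exists l, forall eps, eps > 0 -> exists N, forall n, (n >= N)%nat ->
        bs_norm (bs_add (u n) (bs_opp l)) < eps
}.

Arguments bs_add {_}. Arguments bs_opp {_}. Arguments bs_scal {_}.
Arguments bs_norm {_}. Arguments bs_zero {_}.

Definition bs_sub {X : BanachSpace} (x y : X) : X := bs_add x (bs_opp y).

Record Dual (X : BanachSpace) := {
  df :> X -> R;
  df_add : forall x y, df (bs_add x y) = df x + df y;
  df_scal : forall a x, df (bs_scal a x) = a * df x;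
  df_bounded : exists M, forall x, Rabs (df x) <= M * bs_norm x
}.
Arguments df {_}.

Definition pairing {X : BanachSpace} (x : X) (xs : Dual X) : R := df xs x.

Definition is_zero_dual {X : BanachSpace} (xs : Dual X) : Prop :=
  forall x, pairing x xs = 0.

(** multivalued operators identified with graphs *)
Definition Operator (X : BanachSpace) := X -> Dual X -> Prop.

Definition dom {X : BanachSpace} (T : Operator X) (x : X) : Prop := exists xs, T x xs.
Definition zeros {X : BanachSpace} (T : Operator X) (x : X) : Prop :=
  exists xs, T x xs /\ is_zero_dual xs.

Definition cone {X : BanachSpace} (A : Dual X -> Prop) (xs : Dual X) : Prop :=
  exists t v, 0 <= t /\ A v /\ forall x, pairing x xs = t * pairing x v.
Definition cone_o {X : BanachSpace} (A : Dual X -> Prop) (xs : Dual X) : Prop :=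
  exists t v, 0 < t /\ A v /\ forall x, pairing x xs = t * pairing x v.

Definition normal_cone {X : BanachSpace} (C : X -> Prop) (x : X) (xs : Dual X) : Prop :=
  forall y, C y -> pairing (bs_sub y x) xs <= 0.

Definition sim_p {X : BanachSpace} (x : X) (xs : Dual X) (y : X) (ys : Dual X) : Prop :=
  Rmin (pairing (bs_sub x y) ys) (pairing (bs_sub y x) xs) < 0 \/
  (pairing (bs_sub x y) ys = 0 /\ pairing (bs_sub y x) xs = 0).

Definition rho_polar {X : BanachSpace} (T : Operator X) : Operator X :=
  fun x xs => forall y ys, T y ys -> sim_p x xs y ys.
Definition rho_polar_D {X : BanachSpace} (T : Operator X) : Operator X :=
  fun x xs => rho_polar T x xs /\ dom T x.

Definition pseudomonotone {X : BanachSpace} (T : Operator X) : Prop :=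
  forall x xs y ys, T x xs -> T y ys ->
    pairing (bs_sub y x) xs >= 0 -> pairing (bs_sub y x) ys >= 0.

Definition pre_maximal_pseudomonotone {X : BanachSpace} (T : Operator X) : Prop :=
  pseudomonotone T /\ pseudomonotone (rho_polar T).

Definition equivalent_ops {X : BanachSpace} (T S : Operator X) : Prop :=
  (forall x, dom T x <-> dom S x) /\
  (forall x, zeros T x <-> zeros S x) /\
  (forall x, dom T x -> ~ zeros T x -> forall xs, cone (T x) xs <-> cone (S x) xs).

Definition no_proper_pm_extension_same_dom {X : BanachSpace} (S : Operator X) : Prop :=
  forall S' : Operator X, pseudomonotone S' ->
    (forall x xs, S x xs -> S' x xs) ->
    (forall x, dom S' x <-> dom S x) ->
    forall x xs, S' x xs -> S x xs.

Definition D_maximal_pseudomonotone {X : BanachSpace} (T : Operator X) : Prop :=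
  pseudomonotone T /\
  exists S : Operator X, pseudomonotone S /\ equivalent_ops T S /\
    no_proper_pm_extension_same_dom S.

Definition L_set {X : BanachSpace} (T : Operator X) (x : X) (y : X) : Prop :=
  exists ys, T y ys /\ pairing (bs_sub x y) ys >= 0.

Definition T_hat {X : BanachSpace} (T : Operator X) : Operator X :=
  fun x xs =>
    (zeros T x /\ normal_cone (L_set T x) x xs) \/
    (dom T x /\ ~ zeros T x /\ cone_o (T x) xs).

(* Main.v *)
Require Import Defs.
From Stdlib Require Import Reals Lra Classical.
Open Scope R_scope.

Lemma df0 (X : BanachSpace) (xs : Dual X) : df xs bs_zero = 0.
Proof.
  assert (H := df_add X xs bs_zero bs_zero). rewrite bs_add0 in H. lra.
Qed.

Lemma dfopp (X : BanachSpace) (xs : Dual X) y : df xs (bs_opp y) = - df xs y.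
Proof.
  assert (H := df_add X xs y (bs_opp y)). rewrite bs_addN, df0 in H. lra.
Qed.

Lemma psub (X : BanachSpace) (x y : X) xs :
  pairing (bs_sub x y) xs = pairing x xs - pairing y xs.
Proof. unfold pairing, bs_sub. rewrite df_add, dfopp. ring. Qed.

Lemma simE (X : BanachSpace) (x : X) xs y ys :
  sim_p x xs y ys <-> (pairing x ys - pairing y ys < 0 \/ pairing y xs - pairing x xs < 0 \/
   (pairing x ys - pairing y ys = 0 /\ pairing y xs - pairing x xs = 0)).
Proof.
  unfold sim_p. rewrite !psub. unfold Rmin.
  destruct (Rle_dec _ _); split; intros H; lra.
Qed.

Lemma pm_sim (X : BanachSpace) (S : Operator X) x xs y ys :
  pseudomonotone S -> S x xs -> S y ys -> sim_p x xs y ys.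
Proof.
  intros H Hx Hy. apply simE.
  assert (h1 := H x xs y ys Hx Hy). assert (h2 := H y ys x xs Hy Hx).
  rewrite !psub in h1, h2.
  destruct (Rle_lt_dec 0 (pairing y xs - pairing x xs));
  destruct (Rle_lt_dec 0 (pairing x ys - pairing y ys)).
  - specialize (h1 ltac:(lra)). specialize (h2 ltac:(lra)). lra.
  - lra.
  - lra.
  - lra.
Qed.

Lemma scale_r (X : BanachSpace) (x : X) xs y w s t :
  (forall z, pairing z s = t * pairing z w) -> 0 < t -> sim_p x xs y w -> sim_p x xs y s.
Proof.
  intros He tp H. apply simE in H. apply simE. rewrite !He.
  replace (t * pairing x w - t * pairing y w) with (t * (pairing x w - pairing y w)) by ring.
  destruct H as [H|[H|[H1 H2]]].
  - left. nra.
  - right; left; lra.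
  - right; right. rewrite H1. split; [ring|lra].
Qed.

Lemma scale_l (X : BanachSpace) (x : X) w s y ys t :
  (forall z, pairing z s = t * pairing z w) -> 0 < t -> sim_p x w y ys -> sim_p x s y ys.
Proof.
  intros He tp H. apply simE in H. apply simE. rewrite !He.
  replace (t * pairing y w - t * pairing x w) with (t * (pairing y w - pairing x w)) by ring.
  destruct H as [H|[H|[H1 H2]]].
  - left. lra.
  - right; left; nra.
  - right; right. rewrite H2. split; [lra|ring].
Qed.

Lemma cone_pos (X : BanachSpace) (A : Dual X -> Prop) (x : X) xs t v :
  0 <= t -> A v -> (forall z, pairing z xs = t * pairing z v) -> ~ is_zero_dual xs -> 0 < t.
Proof.
  intros tp _ He nz. destruct (Req_dec t 0) as [e|ne]; [|lra].
  exfalso. apply nz. intros z. rewrite He, e. ring.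
Qed.

Theorem mainTheorem16 (X : BanachSpace) (T : Operator X) :
  pre_maximal_pseudomonotone T ->
  (D_maximal_pseudomonotone T <->
   (forall (x : X) (xs : Dual X), T_hat T x xs <-> rho_polar_D T x xs)).
Proof.
  intros [HpmT HpmR].
  assert (TsubR : forall x xs, T x xs -> rho_polar T x xs).
  { intros x xs H y ys Hy. exact (pm_sim X T x xs y ys HpmT H Hy). }
  split.
  - intros [_ [S [HpmS [[Hdom [Hz Hc]] Hmax]]]].
    assert (SsubR : forall x s, S x s -> rho_polar T x s).
    { intros x s Hs y ys Hy.
      destruct (classic (zeros T y)) as [Zy|nZy].
      - destruct (classic (zeros T x)) as [Zx|nZx].
        + destruct (proj1 (Hz y) Zy) as [y0 [Hy0 z0]].
          destruct Zx as [x0 [Hx0 zx0]].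
          assert (h1 := HpmS y y0 x s Hy0 Hs).
          assert (h2 := HpmT x x0 y ys Hx0 Hy).
          rewrite !psub, !z0 in h1. rewrite !psub, !zx0 in h2.
          specialize (h1 ltac:(lra)). specialize (h2 ltac:(lra)).
          apply simE.
          destruct (Rle_lt_dec 0 (pairing x ys - pairing y ys));
          destruct (Rle_lt_dec 0 (pairing y s - pairing x s)); lra.
        + assert (Hd : dom T x) by (apply Hdom; exists s; exact Hs).
          destruct (proj2 (Hc x Hd nZx s) (ex_intro _ 1 (ex_intro _ s
             (conj (Rle_0_1) (conj Hs (fun z => eq_sym (Rmult_1_l _)))))))
            as [t [v [tp [Hv He]]]].
          assert (tp' : 0 < t).
          { apply (cone_pos X (T x) x s t v tp Hv He).
            intros zs. apply nZx. apply Hz. exists s. auto. }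
          exact (scale_l X x v s y ys t He tp' (TsubR x v Hv y ys Hy)).
      - assert (Hd : dom T y) by (exists ys; exact Hy).
        destruct (proj1 (Hc y Hd nZy ys) (ex_intro _ 1 (ex_intro _ ys
             (conj (Rle_0_1) (conj Hy (fun z => eq_sym (Rmult_1_l _)))))))
            as [t [w [tp [Hw He]]]].
        assert (tp' : 0 < t).
        { apply (cone_pos X (S y) y ys t w tp Hw He).
          intros zs. apply nZy. exists ys. auto. }
        exact (scale_r X x s y w ys t He tp' (pm_sim X S x s y w HpmS Hs Hw)). }
    assert (RDsubS : forall x xs, rho_polar_D T x xs -> S x xs).
    { intros x xs H.
      apply (Hmax (fun x xs => S x xs \/ rho_polar_D T x xs)).
      - intros a as_ b bs Ha Hb.
        assert (Ha' : rho_polar T a as_) by (destruct Ha as [Ha|[Ha _]]; auto).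
        assert (Hb' : rho_polar T b bs) by (destruct Hb as [Hb|[Hb _]]; auto).
        exact (HpmR a as_ b bs Ha' Hb').
      - intros a as_ Ha. left. exact Ha.
      - intros a. split.
        + intros [as_ [Ha|[_ Hd]]]; [exists as_; exact Ha| apply Hdom; exact Hd].
        + intros [as_ Ha]. exists as_. left. exact Ha.
      - right. exact H. }
    intros x xs. split.
    + intros [[Zx Hn]|[Hd [nZ [t [v [tp [Hv He]]]]]]].
      * split.
        -- intros y ys Hy.
           destruct Zx as [x0 [Hx0 zx0]].
           assert (h := HpmT x x0 y ys Hx0 Hy). rewrite !psub, !zx0 in h.
           specialize (h ltac:(lra)).
           apply simE.
           destruct (Rle_lt_dec 0 (pairing x ys - pairing y ys)) as [l|l].
           ++ assert (Hl : L_set T x y) by (exists ys; split; [exact Hy| rewrite psub; lra]).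
              assert (h2 := Hn y Hl). rewrite psub in h2.
              destruct (Rle_lt_dec 0 (pairing y xs - pairing x xs)); lra.
           ++ lra.
        -- destruct Zx as [x0 [Hx0 _]]. exists x0. exact Hx0.
      * split; [|exact Hd].
        intros y ys Hy. exact (scale_l X x v xs y ys t He tp (TsubR x v Hv y ys Hy)).
    + intros [HR Hd].
      destruct (classic (zeros T x)) as [Zx|nZx].
      * left. split; [exact Zx|].
        intros y [ys [Hy Hge]]. assert (h := HR y ys Hy). apply simE in h.
        rewrite psub in Hge |- *. lra.
      * right. split; [exact Hd|]. split; [exact nZx|].
        assert (Hs := RDsubS x xs (conj HR Hd)).
        destruct (proj2 (Hc x Hd nZx xs) (ex_intro _ 1 (ex_intro _ xs
             (conj (Rle_0_1) (conj Hs (fun z => eq_sym (Rmult_1_l _)))))))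
            as [t [v [tp [Hv He]]]].
        assert (tp' : 0 < t).
        { apply (cone_pos X (T x) x xs t v tp Hv He).
          intros zs. apply nZx. apply Hz. exists xs. auto. }
        exists t, v. auto.
  - intros Heq. split; [exact HpmT|].
    exists (rho_polar_D T). split.
    { intros a as_ b bs [Ha _] [Hb _]. exact (HpmR a as_ b bs Ha Hb). }
    split.
    + split; [|split].
      * intros x. split.
        -- intros [xs H]. exists xs. split; [exact (TsubR x xs H)| exists xs; exact H].
        -- intros [xs [_ Hd]]. exact Hd.
      * intros x. split.
        -- intros [xs [H z]]. exists xs. split; [split; [exact (TsubR x xs H)|exists xs; exact H]|exact z].
        -- intros [xs [H z]]. apply Heq in H.
           destruct H as [[Zx _]|[_ [_ [t [v [tp [Hv He]]]]]]]; [exact Zx|].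
           exists v. split; [exact Hv|]. intros y.
           assert (h := z y). rewrite He in h.
           apply (Rmult_eq_reg_l t); [lra|lra].
      * intros x Hd nZ xs. split.
        -- intros [t [v [tp [Hv He]]]]. exists t, v. split; [exact tp|]. split; [|exact He].
           split; [exact (TsubR x v Hv)| exact Hd].
        -- intros [t [w [tp [Hw He]]]]. apply Heq in Hw.
           destruct Hw as [[Zx _]|[_ [_ [t' [v [tp' [Hv He']]]]]]]; [contradiction|].
           exists (t * t'), v. split; [nra|]. split; [exact Hv|].
           intros z. rewrite He, He'. ring.
    + intros S' HpmS' Hsub HdomS' x xs HS'. split.
      * intros y ys Hy. apply (pm_sim X S' x xs y ys HpmS' HS').
        apply Hsub. split; [exact (TsubR y ys Hy)| exists ys; exact Hy].
      * destruct (proj1 (HdomS' x) (ex_intro _ xs HS')) as [xs' [_ Hd]]. exact Hd.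
Qed.
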